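(* Let $\odot$ be a pseudo-multiplication on $[0,\infty]$ with left identity $1_{\odot}$. Then $\odot$ is non-degenerate (i.e. $O(1_{\odot})=0$) if and only if the monoid $([0,1_{\odot}],\odot)$ is commutative.
   Context: A pseudo-multiplication is a binary operation $\odot:[0,\infty]\times[0,\infty]\to[0,\infty]$ such that: $\odot$ is associative; $\odot$ is continuous on $(0,\infty)\times[0,\infty]$; for every $t$, the map $s\mapsto s\odot t$ is continuous on $(0,\infty]$; $\odot$ is nondecreasing in each argument; there is a left identity element $1_{\odot}$, i.e. $1_{\odot}\odot t=t$ for all $t$; there are no zero divisors, i.e. $s\odot t=0$ implies $s=0$ or $t=0$; and $0$ is an annihilator, i.e. $0\odot t=t\odot 0=0$ for all $t$. For $t\in[0,\infty]$ put $O(t)=\inf_{s>0} s\odot t$. The pseudo-multiplication $\odot$ is called non-degenerate if $O(1_{\odot})=0$. *)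

(* Defs.v *)
(* [0,oo] is modelled as the nonnegative part of
   the extended reals \bar R over an arbitrary R : realType. *)
From HB Require Import structures.
From mathcomp Require Import all_boot all_order all_algebra.
From mathcomp Require Import all_classical all_reals all_analysis.
Set Implicit Arguments. Unset Strict Implicit. Unset Printing Implicit Defensive.
Import Order.TTheory GRing.Theory Num.Theory.
Local Open Scope classical_set_scope.
Local Open Scope ereal_scope.

Definition nonneg_ext (R : realType) : set (\bar R) := [set x | 0 <= x].

(* pseudo-multiplication on [0,oo] with left identity e;
   only the values of op on [0,oo] x [0,oo] matter. *)
Definition pseudo_mult (R : realType) (op : \bar R -> \bar R -> \bar R)
    (e : \bar R) : Prop :=
  (
      (forall s t, 0 <= s -> 0 <= t -> 0 <= op s t) /\
      (forall r s t, 0 <= r -> 0 <= s -> 0 <= t -> op (op r s) t = op r (op s t)) /\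
      {within [set p : \bar R * \bar R | (0 < p.1 < +oo) /\ 0 <= p.2],
         continuous (fun p => op p.1 p.2)} /\
      (forall t, 0 <= t ->
         {within [set s : \bar R | 0 < s], continuous (fun s => op s t)}) /\
      (forall s s' t, 0 <= s -> s <= s' -> 0 <= t -> op s t <= op s' t) /\
      (forall s t t', 0 <= s -> 0 <= t -> t <= t' -> op s t <= op s t') /\
      (0 <= e /\ forall t, 0 <= t -> op e t = t) /\
      (forall s t, 0 <= s -> 0 <= t -> op s t = 0 -> s = 0 \/ t = 0) /\
      (forall t, 0 <= t -> op 0 t = 0 /\ op t 0 = 0)).

Definition O_inf (R : realType) (op : \bar R -> \bar R -> \bar R) (t : \bar R)
  : \bar R := ereal_inf [set op s t | s in [set s : \bar R | 0 < s]].

Definition non_degenerate (R : realType) (op : \bar R -> \bar R -> \bar R)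
    (e : \bar R) : Prop := O_inf op e = 0.

(* Main.v *)
Require Import Defs.
From HB Require Import structures.
From mathcomp Require Import all_boot all_order all_algebra.
From mathcomp Require Import all_classical all_reals all_analysis.
Import Order.TTheory GRing.Theory Num.Theory.
Local Open Scope classical_set_scope.
Local Open Scope ereal_scope.


Section Topo.
Variable R : realType.

Lemma sup_in_closure (S : set (\bar R)) : S !=set0 -> closure S (ereal_sup S).
Proof.
move=> S0.
have C : closure S `<=` [set y | y <= ereal_sup S].
  have -> : [set y | y <= ereal_sup S] = closure [set y | y <= ereal_sup S].
    by apply/closure_id; exact: closed_ereal_ge_ereal.
  apply: closureS => y Sy; exact: ereal_sup_ubound.
apply: (@itv_closed_supremums _ (\bar R) (closure S)).
- case: S0 => x Sx; exists x; exact: subset_closure.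
- exact: closed_closure.
- split; first by move=> y /C.
  move=> u uU; apply: ge_ereal_sup => y Sy; apply: uU; exact: subset_closure.
Qed.

Lemma inf_in_closure (S : set (\bar R)) : S !=set0 -> closure S (ereal_inf S).
Proof.
move=> S0.
have C : closure S `<=` [set y | ereal_inf S <= y].
  have -> : [set y | ereal_inf S <= y] = closure [set y | ereal_inf S <= y].
    by apply/closure_id; exact: closed_ereal_le_ereal.
  apply: closureS => y Sy; exact: ereal_inf_lbound.
apply: (@itv_closed_infimums _ (\bar R) (closure S)).
- case: S0 => x Sx; exists x; exact: subset_closure.
- exact: closed_closure.
- split; first by move=> y /C.
  move=> u uU; apply: le_ereal_inf_tmp => y Sy; apply: uU; exact: subset_closure.
Qed.

Lemma sup_pres (f : \bar R -> \bar R) (A S : set (\bar R)) :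
  {within A, continuous f} ->
  (forall u v, A u -> A v -> u <= v -> f u <= f v) ->
  S `<=` A -> S !=set0 -> A (ereal_sup S) ->
  f (ereal_sup S) = ereal_sup (f @` S).
Proof.
move=> fc fm SA S0 Al; apply/eqP; rewrite eq_le; apply/andP; split; last first.
  apply: ge_ereal_sup => _ [s Ss <-]; apply: fm => //; first exact: SA.
  exact: ereal_sup_ubound.
rewrite leNgt; apply/negP => Mlt.
have := (proj1 (subspace_continuousP A f) fc) _ Al.
move=> /(_ [set y | ereal_sup (f @` S) < y]).
have N : nbhs (f (ereal_sup S)) [set y | ereal_sup (f @` S) < y].
  exact: open_ereal_gt'.
move=> /(_ N) W.
have := @sup_in_closure S S0 _ W; case=> z [Sz /= Wz].
have := Wz (SA _ Sz); rewrite ltNge => /negP; apply.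
by apply: ereal_sup_ubound; exists z.
Qed.

Lemma inf_pres (f : \bar R -> \bar R) (A S : set (\bar R)) :
  {within A, continuous f} ->
  (forall u v, A u -> A v -> u <= v -> f u <= f v) ->
  S `<=` A -> S !=set0 -> A (ereal_inf S) ->
  f (ereal_inf S) = ereal_inf (f @` S).
Proof.
move=> fc fm SA S0 Al; apply/eqP; rewrite eq_le; apply/andP; split.
  apply: le_ereal_inf_tmp => _ [s Ss <-]; apply: fm => //; first exact: SA.
  exact: ereal_inf_lbound.
rewrite leNgt; apply/negP => Mlt.
have := (proj1 (subspace_continuousP A f) fc) _ Al.
move=> /(_ [set y | y < ereal_inf (f @` S)]).
have N : nbhs (f (ereal_inf S)) [set y | y < ereal_inf (f @` S)].
  exact: open_ereal_lt'.
move=> /(_ N) W.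
have := @inf_in_closure S S0 _ W; case=> z [Sz /= Wz].
have := Wz (SA _ Sz); rewrite ltNge => /negP; apply.
by apply: ereal_inf_lbound; exists z.
Qed.
End Topo.

Section Gen.
Variable R : realType.

Lemma dense_ge0 (w m : \bar R) : 0 <= w -> w < m -> exists z, w < z < m.
Proof.
case: w => [a| |] //; case: m => [r| |] //.
- move=> _; rewrite lte_fin => ar; exists ((a + r) / 2)%:E.
  by rewrite !lte_fin !midf_lt.
- move=> _ _; exists (a + 1)%:E; rewrite lte_fin ltry andbT.
  by rewrite ltrDl ltr01.
Qed.

Lemma ivt (g : \bar R -> \bar R) p q y :
  0 <= p -> p <= q ->
  (forall u v, p <= u -> u <= v -> v <= q -> g u <= g v) ->
  (forall S, S !=set0 -> (forall z, S z -> p <= z <= q) ->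
     g (ereal_sup S) = ereal_sup (g @` S)) ->
  (forall S, S !=set0 -> (forall z, S z -> p <= z <= q) ->
     g (ereal_inf S) = ereal_inf (g @` S)) ->
  g p <= y -> y <= g q -> exists2 w, p <= w <= q & g w = y.
Proof.
move=> p0 pq gm gs gi gpy ygq.
set Z := [set z | (p <= z <= q) /\ g z <= y].
have Zp : Z p by split => //; rewrite lexx pq.
have Z0 : Z !=set0 by exists p.
have ZI : forall z, Z z -> p <= z <= q by move=> z [].
set w := ereal_sup Z.
have pw : p <= w by apply: ereal_sup_ubound.
have wq : q >= w by apply: ge_ereal_sup => z [/andP[]].
have gwy : g w <= y.
  rewrite /w (gs _ Z0 ZI); apply: ge_ereal_sup => _ [z [_ ?] <-] //.
have [wq'|wq'] := eqVneq w q.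
  exists w; first by rewrite pw wq.
  by apply/eqP; rewrite eq_le gwy /= wq'.
have wltq : w < q by rewrite lt_neqAle wq' wq.
set Z' := [set z | w < z <= q].
have Z'0 : Z' !=set0 by exists q; rewrite /Z' /= wltq lexx.
have Z'I : forall z, Z' z -> p <= z <= q.
  by move=> z /andP[wz zq]; rewrite zq andbT (le_trans pw) // ltW.
have ygz : forall z, Z' z -> y < g z.
  move=> z Z'z; rewrite ltNge; apply/negP => gzy.
  have : Z z by split => //; exact: Z'I.
  move/ereal_sup_ubound; rewrite -/w => zw.
  by move: Z'z => /andP[+ _]; rewrite ltNge zw.
set m := ereal_inf Z'.
have wm : w <= m by apply: le_ereal_inf_tmp => z /andP[/ltW].
have mw : m <= w.
  rewrite leNgt; apply/negP => wm'.
  have [z /andP[wz zm]] := @dense_ge0 w m (le_trans p0 pw) wm'.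
  have : Z' z.
    rewrite /Z' /= wz /=; apply: (le_trans (ltW zm)).
    by apply: ge_ereal_inf; exists q => //; rewrite /Z' /= wltq lexx.
  by move/ereal_inf_lbound; rewrite -/m leNgt zm.
have mwE : m = w by apply/eqP; rewrite eq_le mw wm.
exists w; first by rewrite pw wq.
apply/eqP; rewrite eq_le gwy /= -mwE /m (gi _ Z'0 Z'I).
by apply: le_ereal_inf_tmp => _ [z Z'z <-]; apply/ltW/ygz.
Qed.
End Gen.

Section Main.
Variables (R : realType) (op : \bar R -> \bar R -> \bar R) (e : \bar R).
Hypothesis H : pseudo_mult op e.

Lemma op_ge0 s t : 0 <= s -> 0 <= t -> 0 <= op s t.
Proof. by case: H => h _; apply: h. Qed.
Lemma opA r s t : 0 <= r -> 0 <= s -> 0 <= t -> op (op r s) t = op r (op s t).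
Proof. by case: H => _ [h _]; apply: h. Qed.
Lemma cont2 : {within [set p : \bar R * \bar R | (0 < p.1 < +oo) /\ 0 <= p.2],
         continuous (fun p => op p.1 p.2)}.
Proof. by case: H => _ [_ [h _]]. Qed.
Lemma contR t : 0 <= t -> {within [set s : \bar R | 0 < s], continuous (fun s => op s t)}.
Proof. by case: H => _ [_ [_ [h _]]]; apply: h. Qed.
Lemma monoL s s' t : 0 <= s -> s <= s' -> 0 <= t -> op s t <= op s' t.
Proof. by case: H => _ [_ [_ [_ [h _]]]]; apply: h. Qed.
Lemma monoR s t t' : 0 <= s -> 0 <= t -> t <= t' -> op s t <= op s t'.
Proof. by case: H => _ [_ [_ [_ [_ [h _]]]]]; apply: h. Qed.
Lemma e_ge0 : 0 <= e.
Proof. by case: H => _ [_ [_ [_ [_ [_ [[h _] _]]]]]]. Qed.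
Lemma opel t : 0 <= t -> op e t = t.
Proof. by case: H => _ [_ [_ [_ [_ [_ [[_ h] _]]]]]]; apply: h. Qed.
Lemma op0l t : 0 <= t -> op 0 t = 0.
Proof. by case: H => _ [_ [_ [_ [_ [_ [_ [_ h]]]]]]] t0; case: (h t t0). Qed.
Lemma op0r t : 0 <= t -> op t 0 = 0.
Proof. by case: H => _ [_ [_ [_ [_ [_ [_ [_ h]]]]]]] t0; case: (h t t0). Qed.

Arguments op_ge0 {s t}. Arguments opA {r s t}. Arguments contR {t}.
Arguments monoL {s s' t}. Arguments monoR {s t t'}. Arguments opel {t}.
Arguments op0l {t}. Arguments op0r {t}.

Lemma e_gt0 : 0 < e.
Proof.
rewrite lt_neqAle e_ge0 andbT; apply/negP => /eqP e0.
have := @opel 1 lee01; rewrite -e0 op0l ?lee01 //.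
by move=> h; have := congr1 fine h => /= /eqP; rewrite eq_sym oner_eq0.
Qed.

Definition In (x : \bar R) := 0 <= x <= e.

Lemma mono s s' t t' : 0 <= s -> s <= s' -> 0 <= t -> t <= t' ->
  op s t <= op s' t'.
Proof.
move=> s0 ss t0 tt; have h1 := monoR s0 t0 tt.
have h2 : op s t' <= op s' t' by apply: monoL => //; exact: le_trans tt.
exact: le_trans h1 h2.
Qed.

Lemma opI s t : In s -> In t -> In (op s t).
Proof.
move=> /andP[s0 se] /andP[t0 te]; rewrite /In op_ge0 //=.
by rewrite -[X in _ <= X](opel e_ge0) mono.
Qed.

Lemma op_le_r s t : In s -> 0 <= t -> op s t <= t.
Proof.
by move=> /andP[s0 se] t0; rewrite -[X in _ <= X](opel t0) monoL.
Qed.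

Lemma contL s : 0 < s < +oo -> {within [set t : \bar R | 0 <= t], continuous (op s)}.
Proof.
move=> s_; apply/subspace_continuousP => t0 t00 Q QN.
have := proj1 (subspace_continuousP _ _) cont2 (s, t0) (conj s_ t00) Q QN.
case=> -[U V] /= [Us Vt] UV.
rewrite /= nbhs_simpl /=.
apply: filterS Vt => t Vt t_.
by apply: (UV (s, t)) => //=; split => //; exact: nbhs_singleton.
Qed.

Arguments contL {s}.

Lemma easy_dir : (forall s t, 0 <= s <= e -> 0 <= t <= e -> op s t = op t s) ->
  non_degenerate op e.
Proof.
move=> hc; rewrite /non_degenerate /O_inf.
apply/eqP; rewrite eq_le; apply/andP; split; last first.
  apply: le_ereal_inf_tmp => _ [s s0 <-]; apply: op_ge0; [exact: ltW|exact: e_ge0].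
set O := ereal_inf _.
rewrite leNgt; apply/negP => O0.
have m0 : 0 < Order.min O e by rewrite lt_min O0 e_gt0.
have [z /andP[z0 zm]] := @dense_ge0 R 0 _ (lexx _) m0.
move: zm; rewrite lt_min => /andP[zO ze].
have : O <= op z e by apply: ereal_inf_lbound; exists z.
rewrite hc; last by rewrite lexx e_ge0.
  by rewrite opel ?(ltW z0) // leNgt zO.
by rewrite (ltW z0) (ltW ze).
Qed.

Lemma sup_eq_sub (S T : set (\bar R)) : T `<=` S ->
  (forall s, S s -> exists2 t, T t & s <= t) -> ereal_sup S = ereal_sup T.
Proof.
move=> TS cov; apply/eqP; rewrite eq_le; apply/andP; split; last exact: ereal_sup_le.
apply: ge_ereal_sup => s Ss; have [t Tt st] := cov s Ss.
exact: le_trans st (ereal_sup_ubound Tt).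
Qed.

Lemma inf_eq_sub (S T : set (\bar R)) : T `<=` S ->
  (forall s, S s -> exists2 t, T t & t <= s) -> ereal_inf S = ereal_inf T.
Proof.
move=> TS cov; apply/eqP; rewrite eq_le; apply/andP; split; first exact: ereal_inf_le_tmp.
apply: le_ereal_inf_tmp => s Ss; have [t Tt st] := cov s Ss.
exact: le_trans (ereal_inf_lbound Tt) st.
Qed.

Arguments sup_eq_sub {S T}. Arguments inf_eq_sub {S T}.

Section Hard.
Hypothesis nd : non_degenerate op e.

Lemma rid y : In y -> op y e = y.
Proof.
case/andP => y0 ye.
have [->|yn0] := eqVneq y 0; first by rewrite op0l // e_ge0.
have ypos : 0 < y by rewrite lt_neqAle eq_sym yn0 y0.
have : ereal_inf [set op s e | s in [set s | 0 < s]] < y.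
  by move: nd; rewrite /non_degenerate /O_inf => ->.
case/ereal_inf_lt => _ [z0 /= z00 <-] fz0.
have z0e : z0 <= e.
  rewrite leNgt; apply/negP => ez0.
  have : op e e <= op z0 e by apply: monoL => //; [exact: e_ge0|exact: ltW|exact: e_ge0].
  rewrite opel ?e_ge0 // => /(le_trans ye); rewrite leNgt fz0 //.
have gs : forall S, S !=set0 -> (forall z, S z -> z0 <= z <= e) ->
    op (ereal_sup S) e = ereal_sup [set op s e | s in S].
  move=> S S0 SI; apply: (@sup_pres R (fun s => op s e) [set s | 0 < s] S (contR e_ge0)) => //.
  + by move=> u v u0 v0 uv; apply: monoL => //; [exact: ltW|exact: e_ge0].
  + by move=> z /SI /andP[+ _]; apply: lt_le_trans.
  + case: S0 => s Ss; apply: (lt_le_trans z00); apply: (le_trans _ (ereal_sup_ubound Ss)).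
    by case/andP: (SI _ Ss).
have gi : forall S, S !=set0 -> (forall z, S z -> z0 <= z <= e) ->
    op (ereal_inf S) e = ereal_inf [set op s e | s in S].
  move=> S S0 SI; apply: (@inf_pres R (fun s => op s e) [set s | 0 < s] S (contR e_ge0)) => //.
  + by move=> u v u0 v0 uv; apply: monoL => //; [exact: ltW|exact: e_ge0].
  + by move=> z /SI /andP[+ _]; apply: lt_le_trans.
  + apply: (lt_le_trans z00); apply: le_ereal_inf_tmp => s Ss.
    by case/andP: (SI _ Ss).
have ye' : y <= op e e by rewrite opel ?e_ge0.
have [w /andP[z0w we] fw] := @ivt R (fun s => op s e) z0 e y (ltW z00) z0e
  (fun u v zu uv _ => monoL (le_trans (ltW z00) zu) uv e_ge0)
  gs gi (ltW fz0) ye'.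
by rewrite -fw /= opA ?opel ?e_ge0 //; apply: (le_trans (ltW z00)).
Qed.


Arguments rid {y}.

Lemma In0 : In 0. Proof. by rewrite /In lexx e_ge0. Qed.
Lemma Ine : In e. Proof. by rewrite /In lexx e_ge0. Qed.
Lemma In_ge0 x : In x -> 0 <= x. Proof. by case/andP. Qed.
Lemma In_lee x : In x -> x <= e. Proof. by case/andP. Qed.

Arguments In_ge0 {x}. Arguments In_lee {x}.

Lemma op_le_l s t : In s -> In t -> op s t <= s.
Proof.
move=> sI /andP[t0 te]; rewrite -[X in _ <= X](rid sI).
by apply: monoR => //; exact: In_ge0.
Qed.

Arguments op_le_l {s t}.

Lemma supI S : S !=set0 -> (forall z, S z -> In z) -> In (ereal_sup S).
Proof.
move=> [s Ss] SI; apply/andP; split.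
  by apply: (le_trans (In_ge0 (SI _ Ss))); exact: ereal_sup_ubound.
by apply: ge_ereal_sup => z /SI /In_lee.
Qed.

Lemma infI S : S !=set0 -> (forall z, S z -> In z) -> In (ereal_inf S).
Proof.
move=> [s Ss] SI; apply/andP; split.
  by apply: le_ereal_inf_tmp => z /SI /In_ge0.
by apply: (le_trans _ (In_lee (SI _ Ss))); exact: ereal_inf_lbound.
Qed.

Arguments supI {S}. Arguments infI {S}.

Lemma presR_sup t S : In t -> S !=set0 -> (forall z, S z -> In z) ->
  op (ereal_sup S) t = ereal_sup [set op s t | s in S].
Proof.
move=> tI S0 SI; have t0 := In_ge0 tI.
have [[s0 Ss0 s0p]|nopos] := pselect (exists2 s, S s & 0 < s).
- set T := [set s | S s /\ 0 < s].
  have TS : T `<=` S by move=> s [].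
  have cov : forall s, S s -> exists2 u, T u & s <= u.
    move=> s Ss; have [sp|] := boolP (0 < s); first by exists s.
    rewrite -leNgt => sle0; exists s0 => //; exact: le_trans sle0 (ltW s0p).
  rewrite (sup_eq_sub TS cov).
  rewrite (@sup_eq_sub [set op s t | s in S] [set op s t | s in T]).
  + apply: (@sup_pres R (fun s => op s t) [set s | 0 < s] T (contR t0)).
    * by move=> u v u0 v0 uv; apply: monoL => //; exact: ltW.
    * by move=> s [].
    * by exists s0.
    * by apply: (lt_le_trans s0p); apply: ereal_sup_ubound.
  + by move=> _ [s Ts <-]; exists s => //; apply: TS.
  + move=> _ [s Ss <-]; have [u Tu su] := cov s Ss; exists (op u t).
      by exists u.
    by apply: monoL => //; exact: In_ge0 (SI _ Ss).
- have S0' : forall s, S s -> s = 0.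
    move=> s Ss; apply/eqP; rewrite eq_le In_ge0 ?andbT ?SI //.
    by rewrite leNgt; apply/negP => sp; apply: nopos; exists s.
  case: S0 => s1 Ss1.
  have -> : ereal_sup S = 0.
    apply/eqP; rewrite eq_le; apply/andP; split.
      by apply: ge_ereal_sup => s /S0' ->.
    by rewrite -(S0' _ Ss1); apply: ereal_sup_ubound.
  rewrite op0l //; apply/eqP; rewrite eq_le; apply/andP; split.
    by apply: le_ereal_sup_tmp; exists (op s1 t); [exists s1|rewrite (S0' _ Ss1) op0l].
  by apply: ge_ereal_sup => _ [s /S0' -> <-]; rewrite op0l.
Qed.

Lemma presR_inf t S : In t -> S !=set0 -> (forall z, S z -> In z) ->
  op (ereal_inf S) t = ereal_inf [set op s t | s in S].
Proof.
move=> tI S0 SI; have t0 := In_ge0 tI.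
have iI := infI S0 SI.
have [ip|] := boolP (0 < ereal_inf S).
  apply: (@inf_pres R (fun s => op s t) [set s | 0 < s] S (contR t0)) => //.
  + by move=> u v u0 v0 uv; apply: monoL => //; exact: ltW.
  + by move=> s Ss; apply: (lt_le_trans ip); exact: ereal_inf_lbound.
rewrite -leNgt => i0.
have iE : ereal_inf S = 0 by apply/eqP; rewrite eq_le i0 In_ge0.
rewrite iE op0l //; apply/eqP; rewrite eq_le; apply/andP; split; last first.
  rewrite -iE; apply: le_ereal_inf_tmp => s Ss.
  have h := op_le_l (SI _ Ss) tI.
  have h2 : ereal_inf [set op s0 t | s0 in S] <= op s t by apply: ereal_inf_lbound; exists s.
  exact: le_trans h2 h.
by apply: le_ereal_inf_tmp => _ [s Ss <-]; apply: op_ge0 => //; exact: In_ge0 (SI _ Ss).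
Qed.

Lemma presL_gen s : In s ->
  (s = 0) \/ (e = +oo /\ s = +oo) \/ (0 < s < +oo).
Proof.
move=> /andP[s0 se].
have [->|sn0] := eqVneq s 0; first by left.
right; have [sE|sinf] := eqVneq s +oo.
  left; rewrite sE in se *; split => //; apply/eqP; rewrite eq_le leey /=; exact: se.
right; rewrite lt_neqAle eq_sym sn0 s0 /= ltey sinf //.
Qed.

Arguments presL_gen {s}.

Lemma presL_sup s S : In s -> S !=set0 -> (forall z, S z -> In z) ->
  op s (ereal_sup S) = ereal_sup [set op s t | t in S].
Proof.
move=> sI S0 SI; have sp := supI S0 SI.
case: (presL_gen sI) => [->|[[ei ->]|sr]].
- rewrite op0l ?In_ge0 //; case: S0 => s1 Ss1; apply/eqP; rewrite eq_le; apply/andP; split.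
    by apply: le_ereal_sup_tmp; exists 0 => //; exists s1 => //; rewrite op0l // In_ge0 ?SI.
  by apply: ge_ereal_sup => _ [t St <-]; rewrite op0l // In_ge0 ?SI.
- rewrite -ei opel ?In_ge0 //; congr ereal_sup; apply/seteqP; split.
    by move=> x Sx; exists x => //; rewrite opel // In_ge0 ?SI.
  by move=> _ [x Sx <-]; rewrite opel // In_ge0 ?SI.
  apply: (@sup_pres R (op s) [set t : \bar R | 0 <= t] S (contL sr)) => //.
  + by move=> u v u0 v0 uv; apply: monoR => //; case/andP: sr => /ltW.
  + by move=> z /SI /In_ge0.
  + exact: In_ge0.
Qed.

Lemma presL_inf s S : In s -> S !=set0 -> (forall z, S z -> In z) ->
  op s (ereal_inf S) = ereal_inf [set op s t | t in S].
Proof.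
move=> sI S0 SI; have sp := infI S0 SI.
case: (presL_gen sI) => [->|[[ei ->]|sr]].
- rewrite op0l ?In_ge0 //; case: S0 => s1 Ss1; apply/eqP; rewrite eq_le; apply/andP; split.
    by apply: le_ereal_inf_tmp => _ [t St <-]; rewrite op0l // In_ge0 ?SI.
  by apply: ge_ereal_inf; exists 0 => //; exists s1 => //; rewrite op0l // In_ge0 ?SI.
- rewrite -ei opel ?In_ge0 //; congr ereal_inf; apply/seteqP; split.
    by move=> x Sx; exists x => //; rewrite opel // In_ge0 ?SI.
  by move=> _ [x Sx <-]; rewrite opel // In_ge0 ?SI.
- apply: (@inf_pres R (op s) [set t : \bar R | 0 <= t] S (contL sr)) => //.
  + by move=> u v u0 v0 uv; apply: monoR => //; case/andP: sr => /ltW.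
  + by move=> z /SI /In_ge0.
  + exact: In_ge0.
Qed.


Arguments presL_sup {s S}. Arguments presL_inf {s S}.
Arguments presR_sup {t S}. Arguments presR_inf {t S}.

Fixpoint pw (w : \bar R) (n : nat) : \bar R :=
  if n is k.+1 then op (pw w k) w else w.

Lemma pwI w n : In w -> In (pw w n).
Proof. by move=> wI; elim: n => //= n IH; apply: opI. Qed.

Arguments pwI {w}.

Lemma pw_mono v w n : In v -> In w -> v <= w -> pw v n <= pw w n.
Proof.
move=> vI wI vw; elim: n => //= n IH.
by apply: mono => //; [exact: In_ge0 (pwI n vI)|exact: In_ge0].
Qed.

Arguments pw_mono {v w}.

Lemma pw_le w n : In w -> pw w n <= w.
Proof.
move=> wI; elim: n => //= n IH.
exact: le_trans (op_le_l (pwI n wI) wI) IH.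
Qed.

Arguments pw_le {w}.

Lemma pw_add w k n : In w -> op (pw w k) (pw w n) = pw w (k + n).+1.
Proof.
move=> wI; elim: n => [|n IH] /=; first by rewrite addn0.
rewrite -opA ?In_ge0 ?pwI // IH addnS //.
Qed.

Arguments pw_add {w}.

Lemma pw_comm w k n : In w -> op (pw w k) (pw w n) = op (pw w n) (pw w k).
Proof. by move=> wI; rewrite !pw_add // addnC. Qed.

Arguments pw_comm {w}.

Lemma pw_e n : pw e n = e.
Proof. by elim: n => //= n ->; rewrite opel // e_ge0. Qed.

Lemma pw_sup n S : S !=set0 -> (forall z, S z -> In z) ->
  pw (ereal_sup S) n = ereal_sup [set pw s n | s in S].
Proof.
move=> S0 SI; have lI := supI S0 SI.
elim: n => [|n IH] /=; first by rewrite image_id.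
apply/eqP; rewrite eq_le; apply/andP; split; last first.
  apply: ge_ereal_sup => _ [s Ss <-] /=.
  by apply: pw_mono n.+1 (SI _ Ss) lI _; apply: ereal_sup_ubound.
rewrite (presL_sup (pwI n lI) S0 SI).
apply: ge_ereal_sup => _ [s' Ss' <-]; rewrite IH.
have S0' : [set pw s n | s in S] !=set0 by case: S0 => s Ss; exists (pw s n), s.
rewrite (presR_sup (SI _ Ss') S0'); last by move=> _ [s Ss <-]; apply: pwI; apply: SI.
apply: ge_ereal_sup => _ [_ [s Ss <-] <-].
have sI := SI _ Ss; have s'I := SI _ Ss'.
have [ss'|s's] := leP s s'.
  apply: le_ereal_sup_tmp; exists (pw s' n.+1); first by exists s'.
  by apply: monoL => //; [exact: In_ge0 (pwI n sI)|exact: pw_mono|exact: In_ge0].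
apply: le_ereal_sup_tmp; exists (pw s n.+1); first by exists s.
by apply: monoR => //; [exact: In_ge0 (pwI n sI)|exact: In_ge0|exact: ltW].
Qed.

Lemma pw_inf n S : S !=set0 -> (forall z, S z -> In z) ->
  pw (ereal_inf S) n = ereal_inf [set pw s n | s in S].
Proof.
move=> S0 SI; have lI := infI S0 SI.
elim: n => [|n IH] /=; first by rewrite image_id.
apply/eqP; rewrite eq_le; apply/andP; split.
  apply: le_ereal_inf_tmp => _ [s Ss <-] /=.
  by apply: pw_mono n.+1 lI (SI _ Ss) _; apply: ereal_inf_lbound.
rewrite (presL_inf (pwI n lI) S0 SI).
apply: le_ereal_inf_tmp => _ [s' Ss' <-]; rewrite IH.
have S0' : [set pw s n | s in S] !=set0 by case: S0 => s Ss; exists (pw s n), s.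
rewrite (presR_inf (SI _ Ss') S0'); last by move=> _ [s Ss <-]; apply: pwI; apply: SI.
apply: le_ereal_inf_tmp => _ [_ [s Ss <-] <-].
have sI := SI _ Ss; have s'I := SI _ Ss'.
have [ss'|s's] := leP s s'.
  apply: ge_ereal_inf; exists (pw s n.+1); first by exists s.
  by apply: monoR => //; [exact: In_ge0 (pwI n sI)|exact: In_ge0].
apply: ge_ereal_inf; exists (pw s' n.+1); first by exists s'.
by apply: monoL => //; [exact: In_ge0 (pwI n s'I)|apply: pw_mono => //; exact: ltW|exact: In_ge0].
Qed.


Lemma root x n : In x -> exists2 w, x <= w <= e & pw w n = x.
Proof.
move=> xI; have x0 := In_ge0 xI.
have wI : forall w, x <= w <= e -> In w.
  by move=> w /andP[xw we]; rewrite /In we (le_trans x0 xw).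
apply: (@ivt R (fun w => pw w n) x e x x0 (In_lee xI)).
- by move=> u v xu uv ve; apply: pw_mono => //; apply: wI;
    rewrite ?xu ?ve ?(le_trans uv ve) ?(le_trans xu uv).
- by move=> S S0 SI; apply: pw_sup => // z /SI /wI.
- by move=> S S0 SI; apply: pw_inf => // z /SI /wI.
- exact: pw_le.
- by rewrite pw_e; exact: In_lee.
Qed.

Lemma idem_low p u : In p -> op p p = p -> In u -> u <= p ->
  op p u = u /\ op u p = u.
Proof.
move=> pI pp uI up; have p0 := In_ge0 pI.
have sub : forall S, (forall z, S z -> 0 <= z <= p) -> forall z, S z -> In z.
  by move=> S SI z /SI /andP[z0 zp]; rewrite /In z0 (le_trans zp (In_lee pI)).
split.
- have [w /andP[w0 wp] fw] := @ivt R (op p) 0 p u (lexx _) p0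
    (fun a b a0 ab _ => monoR p0 a0 ab)
    (fun S S0 SI => presL_sup pI S0 (sub S SI))
    (fun S S0 SI => presL_inf pI S0 (sub S SI))
    (ltac:(by rewrite op0r // In_ge0)) (ltac:(by rewrite pp)).
  by rewrite -fw -opA ?pp //; exact: In_ge0.
- have [w /andP[w0 wp] fw] := @ivt R (fun s => op s p) 0 p u (lexx _) p0
    (fun a b a0 ab _ => monoL a0 ab p0)
    (fun S S0 SI => presR_sup pI S0 (sub S SI))
    (fun S S0 SI => presR_inf pI S0 (sub S SI))
    (ltac:(by rewrite /= op0l // In_ge0)) (ltac:(by rewrite /= pp)).
  by rewrite -fw /= opA ?pp //; exact: In_ge0.
Qed.

Lemma idem_high p u : In p -> op p p = p -> In u -> p <= u ->
  op p u = p /\ op u p = p.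
Proof.
move=> pI pp uI pu; have p0 := In_ge0 pI.
split; apply/eqP; rewrite eq_le; apply/andP; split.
- exact: op_le_l.
- by rewrite -[X in X <= _]pp; apply: monoR.
- by rewrite -[X in _ <= X](opel p0); apply: monoL => //; [exact: In_ge0|exact: In_lee].
- by rewrite -[X in X <= _]pp; apply: monoL.
Qed.

Arguments idem_low {p u}. Arguments idem_high {p u}.

Lemma idem_comm p u : In p -> op p p = p -> In u -> op p u = op u p.
Proof.
move=> pI pp uI; have [up|pu] := leP u p.
  by have [-> ->] := idem_low pI pp uI up.
by have [-> ->] := idem_high pI pp uI (ltW pu).
Qed.

Lemma between x y p : In x -> In y -> In p -> op p p = p -> x <= p -> p <= y ->
  op x y = op y x.
Proof.
move=> xI yI pI pp xp py.
have [xp1 xp2] := idem_low pI pp xI xp.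
have [yp1 yp2] := idem_high pI pp yI py.
have x0 := In_ge0 xI; have y0 := In_ge0 yI; have p0 := In_ge0 pI.
transitivity x.
  by rewrite -[in LHS]xp2 opA // yp1 xp2.
by rewrite -[in RHS]xp1 -opA // yp2 xp1.
Qed.

Lemma inf_pw_idem c : In c ->
  let q := ereal_inf (range (pw c)) in In q /\ op q q = q.
Proof.
move=> cI q.
have R0 : range (pw c) !=set0 by exists (pw c 0), 0%N.
have RI : forall z, range (pw c) z -> In z by move=> _ [k _ <-]; exact: pwI.
have qI : In q := infI R0 RI.
split => //; apply/eqP; rewrite eq_le; apply/andP; split; first exact: op_le_l.
rewrite {2}/q (presR_inf qI R0 RI).
apply: le_ereal_inf_tmp => _ [_ [k _ <-] <-].
rewrite /q (presL_inf (pwI k cI) R0 RI).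
apply: le_ereal_inf_tmp => _ [_ [j _ <-] <-].
rewrite pw_add //; apply: ereal_inf_lbound; by exists (k + j).+1.
Qed.


Arguments inf_pw_idem {c}. Arguments between {x y p}.

Lemma main_le x y : In x -> In y -> x <= y -> op x y = op y x.
Proof.
move=> xI yI xy.
case: (pselect (op x y = op y x)) => // ny; exfalso.
set D := fun z => In z /\ op x z = op z x.
have Dsup : forall S, S !=set0 -> (forall z, S z -> D z) -> D (ereal_sup S).
  move=> S S0 SD; have SI : forall z, S z -> In z by move=> z /SD [].
  split; first exact: supI.
  rewrite (presL_sup xI S0 SI) (presR_sup xI S0 SI); congr ereal_sup.
  apply/seteqP; split => _ [z Sz <-]; exists z => //; by case: (SD _ Sz).
have Dinf : forall S, S !=set0 -> (forall z, S z -> D z) -> D (ereal_inf S).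
  move=> S S0 SD; have SI : forall z, S z -> In z by move=> z /SD [].
  split; first exact: infI.
  rewrite (presL_inf xI S0 SI) (presR_inf xI S0 SI); congr ereal_inf.
  apply/seteqP; split => _ [z Sz <-]; exists z => //; by case: (SD _ Sz).
have x0 := In_ge0 xI.
have D0 : D 0 by split; [exact: In0|rewrite op0l // op0r].
have De : D e by split; [exact: Ine|rewrite rid // opel].
have Dx : D x by [].
have Didem : forall p, In p -> op p p = p -> D p.
  by move=> p pI pp; split => //; apply/esym/idem_comm.
set Sy := [set z | D z /\ z <= y].
set g := ereal_sup Sy.
have Sy0 : Sy !=set0 by exists 0; split => //; exact: In_ge0.
have Dg : D g by apply: Dsup => // z [].
have gy : g <= y by apply: ge_ereal_sup => z [].
set Sh := [set z | D z /\ y <= z].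
set h := ereal_inf Sh.
have Sh0 : Sh !=set0 by exists e; split => //; exact: In_lee.
have Dh : D h by apply: Dinf => // z [].
have yh : y <= h by apply: le_ereal_inf_tmp => z [].
have gap : forall z, D z -> g < z -> h <= z.
  move=> z Dz gz; have [zy|yz] := leP z y.
    have zg : z <= g by apply: ereal_sup_ubound.
    by move: gz; rewrite ltNge zg.
  by apply: ereal_inf_lbound; split => //; exact: ltW.
have xg : x <= g by apply: ereal_sup_ubound.
have hex : forall n, exists w, x <= w <= e /\ pw w n = x.
  by move=> n; have [w ? ?] := root x n xI; exists w.
have [wf hw] := choice hex.
have wI : forall n, In (wf n).
  by move=> n; case: (hw n) => /andP[xw we] _; rewrite /In we (le_trans x0 xw).
have Dpow : forall n k, D (pw (wf n) k).
  move=> n k; split; first exact: pwI.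
  rewrite -[in LHS](proj2 (hw n)) -[in RHS](proj2 (hw n)).
  exact: pw_comm.
set c := ereal_sup (range wf).
have R0 : range wf !=set0 by exists (wf 0%N), 0%N.
have cI : In c by apply: supI => // _ [n _ <-].
have [qI qq] := inf_pw_idem cI.
set q := ereal_inf (range (pw c)) in qI qq.
have xq : x <= q.
  apply: le_ereal_inf_tmp => _ [k _ <-].
  rewrite -{1}(proj2 (hw k)); apply: pw_mono => //.
  by apply: ereal_sup_ubound; exists k.
have yq : y < q.
  rewrite ltNge; apply/negP => qy.
  by apply: ny; apply: (between xI yI qI qq xq qy).
have hI : In h by case: Dh.
have hq : h <= q by apply: ereal_inf_lbound; split; [exact: Didem|exact: ltW].
have qc : q <= c.
  apply: (@le_trans _ _ (pw c 0%N)); first by apply: ereal_inf_lbound; exists 0%N.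
  by [].
have yh' : y < h by rewrite lt_neqAle yh andbT;
  apply/negP => /eqP hy; apply: ny; rewrite -hy in Dh; case: Dh => _ ->.
have gh : g < h by apply: (le_lt_trans gy).
have hc : g < op h c.
  apply: (lt_le_trans gh); have [_ e1] := idem_low qI qq hI hq.
  rewrite -[X in X <= _]e1.
  apply: monoR => //; [exact: In_ge0|exact: In_ge0].
move: hc; rewrite (presL_sup hI R0); last by move=> _ [n _ <-].
case/ereal_sup_gt => _ [_ [n _ <-] <-] ghw.
set w := wf n in ghw.
have hw' : op h w <= w by apply: op_le_r => //; exact: In_ge0 (wI n).
have allk : forall k, h <= pw w k.
  elim => [|k IH] /=.
    by apply: gap; [exact: (Dpow n 0%N)|exact: lt_le_trans ghw hw'].
  apply: gap; first exact: (Dpow n k.+1).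
  apply: (lt_le_trans ghw); apply: monoL => //; [exact: In_ge0 hI|exact: In_ge0 (wI n)].
have := allk n; rewrite (proj2 (hw n)) => hx.
have := le_trans hx xy; rewrite leNgt.
by rewrite yh'.
Qed.

End Hard.
End Main.

Theorem lemma2p7 (R : realType) (op : \bar R -> \bar R -> \bar R) (e : \bar R) :
  pseudo_mult op e ->
  (non_degenerate op e <->
   (forall s t, 0 <= s <= e -> 0 <= t <= e -> op s t = op t s)).
Proof.
move=> H; split; last exact: (@easy_dir R op e H).
move=> nd s t sI tI; have [st|ts] := leP s t.
- exact: (@main_le R op e H nd s t sI tI st).
- symmetry; exact: (@main_le R op e H nd t s tI sI (ltW ts)).
Qed.
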